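(* Let $X,Y$ be real Banach spaces with a bilinear map $\langle\cdot,\cdot\rangle\colon X\times Y\to\mathbb{R}$ and normalized sequences $(e_j)\subset X$, $(f_j)\subset Y$ satisfying (B1)–(B5) below, and assume $(e_j)$ is $(C_u,C_s)$-subsymmetric. Let $L\in\mathbb{N}$, let $(\mathcal{B}_j)$ be a sequence of sets $\mathcal{B}_j\subset\mathbb{N}$ with $|\mathcal{B}_j|=L$ and $\max\mathcal{B}_j<\min\mathcal{B}_{j+1}$ for all $j$, and let $(\varepsilon_k)\in\{\pm1\}^{\mathbb{N}}$. Put $b_j=\sum_{k\in\mathcal{B}_j}\varepsilon_ke_k$, $d_j=\sum_{k\in\mathcal{B}_j}\varepsilon_kf_k$, and define $B,Q\colon X\to X$ by $$Bx=\sum_{j=1}^\infty\langle x,f_j\rangle b_j,\qquad Qx=\sum_{j=1}^\infty\langle x,d_j\rangle e_j,\qquad x\in X.$$ Then $B$ and $Q$ are well defined bounded operators (the series converging in $\sigma(X,Y)$), $QB=L\cdot I_X$, and $\|B\|,\|Q\|\le C_uC_s\cdot L$.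
   Context: Standing assumptions: (B1) if $\langle x,y\rangle=0$ for all $y\in Y$ then $x=0$; (B2) if $\langle x,y\rangle=0$ for all $x\in X$ then $y=0$; (B3) there is $C_d>0$ with $|\langle x,y\rangle|\le C_d\|x\|\|y\|$; (B4) $\langle e_j,f_k\rangle=1$ if $j=k$ and $0$ otherwise; (B5) every $x\in X$ has the unique representation $x=\sum_j\langle x,f_j\rangle e_j$ converging in $\sigma(X,Y)$, the topology generated by the seminorms $x\mapsto|\langle x,y\rangle|$, $y\in Y$. Series $\sum a_je_j$ are required to converge in $\sigma(X,Y)$. $(e_j)$ is $C_u$-unconditional if $\|\sum\gamma_ja_je_j\|\le C_u\sup_k|\gamma_k|\|\sum a_je_j\|$; $C_s$-spreading if for every increasing $(n_j)$, $C_s^{-1}\|\sum a_je_{n_j}\|\le\|\sum a_je_j\|\le C_s\|\sum a_je_{n_j}\|$; $(C_u,C_s)$-subsymmetric if both. *)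

(* Defs.v *)
From HB Require Import structures.
From mathcomp Require Import all_boot all_order all_algebra.
From mathcomp Require Import all_classical all_reals all_analysis.
Set Implicit Arguments. Unset Strict Implicit. Unset Printing Implicit Defensive.
Import Order.TTheory GRing.Theory Num.Theory.
Import numFieldNormedType.Exports.
Local Open Scope classical_set_scope.
Local Open Scope ring_scope.

Section Defs.
Context {R : realType} {X Y : normedModType R} (pair : X -> Y -> R).

(** The series [\sum_j u j] converges to [x] in sigma(X,Y): for every [y],
    the pairings of the partial sums with [y] converge to [pair x y]. *)
Definition sigma_sum (u : nat -> X) (x : X) : Prop :=
  forall y : Y, (fun n : nat => pair (\sum_(i < n) u i) y) @ \oo --> pair x y.

Definition unconditional (e : nat -> X) (Cu : R) : Prop :=
  forall (a gamma : nat -> R) (M : R) (x : X),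
    (forall k, `|gamma k| <= M) ->
    sigma_sum (fun j => a j *: e j) x ->
    exists z, sigma_sum (fun j => (gamma j * a j) *: e j) z /\
              `|z| <= Cu * M * `|x|.

Definition spreading (e : nat -> X) (Cs : R) : Prop :=
  forall (a : nat -> R) (n : nat -> nat), (forall i, (n i < n i.+1)%N) ->
    (forall x, sigma_sum (fun j => a j *: e j) x ->
       exists z, sigma_sum (fun j => a j *: e (n j)) z /\ Cs^-1 * `|z| <= `|x|) /\
    (forall z, sigma_sum (fun j => a j *: e (n j)) z ->
       exists x, sigma_sum (fun j => a j *: e j) x /\ `|x| <= Cs * `|z|).

Definition subsymmetric (e : nat -> X) (Cu Cs : R) : Prop :=
  unconditional e Cu /\ spreading e Cs.

End Defs.

(* Main.v *)
Require Import Defs.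
From HB Require Import structures.
From mathcomp Require Import all_boot all_order all_algebra.
From mathcomp Require Import all_classical all_reals all_analysis.
Import Order.TTheory GRing.Theory Num.Theory.
Import numFieldNormedType.Exports.
Local Open Scope ring_scope.

Definition linl {R : realType} {X Y : normedModType R} (pair : X -> Y -> R) :=
  forall (a : R) (x1 x2 : X) (y : Y), pair (a *: x1 + x2) y = a * pair x1 y + pair x2 y.

Lemma pair0 {R : realType} {X Y : normedModType R} (pair : X -> Y -> R) :
  linl pair -> forall y, pair 0 y = 0.
Proof.
move=> H y; have := H 1 0 0 y; rewrite scaler0 addr0 mul1r => /eqP; rewrite eq_sym.
by rewrite -subr_eq0 -addrA subrr addr0 => /eqP.
Qed.

Lemma pairD {R : realType} {X Y : normedModType R} (pair : X -> Y -> R) :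
  linl pair -> forall x1 x2 y, pair (x1 + x2) y = pair x1 y + pair x2 y.
Proof. by move=> H x1 x2 y; have := H 1 x1 x2 y; rewrite scale1r mul1r. Qed.

Lemma pairZ {R : realType} {X Y : normedModType R} (pair : X -> Y -> R) :
  linl pair -> forall a x y, pair (a *: x) y = a * pair x y.
Proof. by move=> H a x y; rewrite -[a *: x]addr0 H pair0 // addr0. Qed.

Lemma pairB {R : realType} {X Y : normedModType R} (pair : X -> Y -> R) :
  linl pair -> forall x1 x2 y, pair (x1 - x2) y = pair x1 y - pair x2 y.
Proof. by move=> H x1 x2 y; rewrite pairD // -scaleN1r pairZ // mulN1r. Qed.

Lemma pair_sum {R : realType} {X Y : normedModType R} (pair : X -> Y -> R) :
  linl pair -> forall (I : Type) (s : seq I) (P : pred I) (F : I -> X) y,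
  pair (\sum_(i <- s | P i) F i) y = \sum_(i <- s | P i) pair (F i) y.
Proof.
move=> H I s P F y.
elim: s => [|i s IH]; first by rewrite !big_nil pair0.
by rewrite !big_cons; case: (P i); rewrite ?pairD ?IH.
Qed.

Lemma sigma_uniq {R : realType} {X Y : normedModType R} (pair : X -> Y -> R) :
  linl pair -> (forall x : X, (forall y : Y, pair x y = 0) -> x = 0) ->
  forall u x x', sigma_sum pair u x -> sigma_sum pair u x' -> x = x'.
Proof.
move=> H B1 u x x' h1 h2; apply/eqP; rewrite -subr_eq0; apply/eqP/B1 => y.
by rewrite pairB // -(cvg_lim _ (h1 y)) // -(cvg_lim _ (h2 y)) // subrr.
Qed.

Lemma sigma_lin {R : realType} {X Y : normedModType R} (pair : X -> Y -> R) :
  linl pair -> forall u v x z a, sigma_sum pair u x -> sigma_sum pair v z ->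
  sigma_sum pair (fun j => a *: u j + v j) (a *: x + z).
Proof.
move=> H u v x z a hu hv y.
rewrite H.
have -> : (fun n : nat => pair (\sum_(i < n) (a *: u i + v i)) y) =
  (fun n => a * pair (\sum_(i < n) u i) y + pair (\sum_(i < n) v i) y).
  by apply: funext => n; rewrite big_split /= -scaler_sumr H.
apply: cvgD; last exact: hv.
exact: cvgMr.
Qed.

Lemma sigma0 {R : realType} {X Y : normedModType R} (pair : X -> Y -> R) :
  linl pair -> sigma_sum pair (fun _ => 0) 0.
Proof.
move=> H y; rewrite pair0 //.
have -> : (fun n : nat => pair (\sum_(i < n) (0:X)) y) = (fun _ => 0).
  by apply: funext => n; rewrite big1 // pair0.
exact: cvg_cst.
Qed.

Lemma sigma_big {R : realType} {X Y : normedModType R} (pair : X -> Y -> R) :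
  linl pair -> forall (s : seq nat) (u : nat -> nat -> X) (x : nat -> X),
  (forall l, l \in s -> sigma_sum pair (u l) (x l)) ->
  sigma_sum pair (fun j => \sum_(l <- s) u l j) (\sum_(l <- s) x l).
Proof.
move=> H; elim=> [|l s IH] u x hs.
  have -> : (fun j => \sum_(l <- [::]) u l j) = (fun _ => 0).
    by apply: funext => j; rewrite big_nil.
  rewrite big_nil; exact: sigma0.
have -> : (fun j => \sum_(l0 <- l :: s) u l0 j) =
  (fun j => 1 *: u l j + \sum_(l0 <- s) u l0 j).
  by apply: funext => j; rewrite big_cons scale1r.
rewrite big_cons -[x l]scale1r; apply: sigma_lin => //.
  by apply: hs; rewrite mem_head.
by apply: IH => l' hl'; apply: hs; rewrite in_cons hl' orbT.
Qed.

Lemma incr_lt (n : nat -> nat) : (forall i, (n i < n i.+1)%N) ->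
  forall i j, (i < j)%N -> (n i < n j)%N.
Proof.
move=> hn i; elim=> // j IH; rewrite ltnS leq_eqVlt => /orP [/eqP -> //|/IH h].
exact: ltn_trans h (hn j).
Qed.

Lemma incr_ltE (n : nat -> nat) : (forall i, (n i < n i.+1)%N) ->
  forall i j, (n i < n j)%N = (i < j)%N.
Proof.
move=> hn i j; case: (ltnP i j) => [/(@incr_lt n hn) -> //|].
rewrite leq_eqVlt => /orP [/eqP -> | /(@incr_lt n hn) h]; first by rewrite ltnn.
by apply/negbTE; rewrite -leqNgt ltnW.
Qed.

Lemma incr_ge (n : nat -> nat) : (forall i, (n i < n i.+1)%N) -> forall i, (i <= n i)%N.
Proof. by move=> hn; elim=> // i IH; apply: leq_ltn_trans IH (hn i). Qed.

Lemma sub_sum {R : realType} {X : normedModType R} (w : nat -> X) (n : nat -> nat) :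
  (forall i, (n i < n i.+1)%N) -> forall M,
  \sum_(0 <= k < n M) (if `[< exists j, n j = k >] then w k else 0) =
  \sum_(0 <= j < M) w (n j).
Proof.
move=> hn; elim=> [|M IH].
  rewrite [RHS]big_geq // big_nat big1 // => k /andP [_ hk].
  case: asboolP => // [[j hj]]; move: hk; rewrite -hj.
  by case: j {hj} => [|j]; rewrite ?ltnn // incr_ltE.
rewrite (@big_cat_nat _ _ _ (n M)) //=; last exact: ltnW.
rewrite IH big_nat_recr //=; congr (_ + _).
rewrite big_ltn //; case: asboolP => [_|[]]; last by exists M.
rewrite big_nat big1 ?addr0 // => k /andP [hk1 hk2].
case: asboolP => // [[j hj]]; move: hk1 hk2; rewrite -hj !incr_ltE //.
by move=> h1 h2; have := leq_ltn_trans h1 h2; rewrite ltnn.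
Qed.

Lemma sigma_subseq {R : realType} {X Y : normedModType R} (pair : X -> Y -> R)
  (w : nat -> X) (n : nat -> nat) (z : X) : (forall i, (n i < n i.+1)%N) ->
  sigma_sum pair (fun k => if `[< exists j, n j = k >] then w k else 0) z ->
  sigma_sum pair (fun j => w (n j)) z.
Proof.
move=> hn hs y.
have nto : (n @ \oo --> \oo)%classic.
  move=> P [N _ PN]; exists N => // m /= hm; apply: PN => /=.

  exact: leq_trans hm (@incr_ge n hn m).
suff -> : (fun M : nat => pair (\sum_(i < M) w (n i)) y) =
  (fun N => pair (\sum_(i < N) (if `[< exists j, n j = i >] then w i else 0)) y) \o n.
  exact: (cvg_comp n _ nto (hs y)).
apply: funext => M /=; by rewrite -(big_mkord xpredT (fun i => w (n i))) -(big_mkord xpredT (fun i => if `[< exists j, n j = i >] then w i else 0)) sub_sum.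
Qed.
Theorem proposition3p5
  (R : realType) (X Y : completeNormedModType R) (pair : X -> Y -> R)
  (e : nat -> X) (f : nat -> Y) (Cd Cu Cs : R)
  (* bilinearity of the pairing *)
  (pair_linl : forall (a : R) (x1 x2 : X) (y : Y),
      pair (a *: x1 + x2) y = a * pair x1 y + pair x2 y)
  (pair_linr : forall (a : R) (x : X) (y1 y2 : Y),
      pair x (a *: y1 + y2) = a * pair x y1 + pair x y2)
  (* normalized sequences *)
  (e_norm : forall j, `|e j| = 1) (f_norm : forall j, `|f j| = 1)
  (* (B1)-(B5) *)
  (B1 : forall x : X, (forall y : Y, pair x y = 0) -> x = 0)
  (B2 : forall y : Y, (forall x : X, pair x y = 0) -> y = 0)
  (Cd_gt0 : 0 < Cd)
  (B3 : forall x y, `|pair x y| <= Cd * `|x| * `|y|)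
  (B4 : forall j k, pair (e j) (f k) = if j == k then 1 else 0)
  (B5 : forall x : X, sigma_sum pair (fun j => pair x (f j) *: e j) x)
  (B5_uniq : forall (a : nat -> R) (x : X),
      sigma_sum pair (fun j => a j *: e j) x -> forall j, a j = pair x (f j))
  (* subsymmetry *)
  (e_subsym : subsymmetric pair e Cu Cs)
  (* blocks *)
  (L : nat) (Bs : nat -> seq nat)
  (Bs_uniq : forall j, uniq (Bs j))
  (Bs_size : forall j, size (Bs j) = L)
  (Bs_incr : forall j k l, k \in Bs j -> l \in Bs j.+1 -> (k < l)%N)
  (eps : nat -> R) (eps_sign : forall k, eps k = 1 \/ eps k = -1) :
  let b := fun j => \sum_(k <- Bs j) eps k *: e k in
  let d := fun j => \sum_(k <- Bs j) eps k *: f k in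
  exists BB QQ : X -> X,
    (forall x, sigma_sum pair (fun j => pair x (f j) *: b j) (BB x)) /\
    (forall x, sigma_sum pair (fun j => pair x (d j) *: e j) (QQ x)) /\
    (forall (a : R) (x1 x2 : X), BB (a *: x1 + x2) = a *: BB x1 + BB x2) /\
    (forall (a : R) (x1 x2 : X), QQ (a *: x1 + x2) = a *: QQ x1 + QQ x2) /\
    (forall x, QQ (BB x) = L%:R *: x) /\
    (forall x, `|BB x| <= Cu * Cs * L%:R * `|x|) /\
    (forall x, `|QQ x| <= Cu * Cs * L%:R * `|x|).
Proof.
move=> b d.
have H : linl pair := pair_linl.
have H' : linl (fun (y : Y) (x : X) => pair x y).
  by move=> a y1 y2 x; exact: pair_linr.
have suniq := @sigma_uniq _ _ _ pair H B1.
case: e_subsym => hu hsp.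
have Cs_pos : 0 < Cs.
  have [_ h2] := hsp (fun j => pair (e 0%N) (f j)) id (fun i => ltnSn i).
  have [x' [hx' hn]] := h2 (e 0%N) (B5 (e 0%N)).
  have E := suniq _ _ _ hx' (B5 (e 0%N)).
  rewrite E e_norm mulr1 in hn; exact: lt_le_trans ltr01 hn.
have Cu_pos : 0 <= Cu.
  have n1 : `|1| <= (1:R) by rewrite normr1.
  have [z [hz hn]] := hu (fun j => pair (e 0%N) (f j)) (fun _ => 1) 1 (e 0%N)
    (fun _ => n1) (B5 (e 0%N)).
  have E : (fun j => (1 * pair (e 0%N) (f j)) *: e j) = (fun j => pair (e 0%N) (f j) *: e j).
    by apply: funext => j; rewrite mul1r.
  rewrite E in hz; have E' := suniq _ _ _ hz (B5 (e 0%N)).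
  rewrite E' e_norm !mulr1 in hn; exact: le_trans ler01 hn.
pose nn l j := nth 0%N (Bs j) l.
have nn_incr : forall l, (l < L)%N -> forall i, (nn l i < nn l i.+1)%N.
  by move=> l hl i; apply: (Bs_incr i); apply: mem_nth; rewrite Bs_size.
have eps_le1 : forall k, `|eps k| <= 1.
  by move=> k; case: (eps_sign k) => ->; rewrite ?normrN normr1.
have sum_bound : forall (W : nat -> X) (C : R), (forall l, (l < L)%N -> `|W l| <= C) ->
    `|\sum_(0 <= l < L) W l| <= C * L%:R.
  move=> W C hW; apply: le_trans (ler_norm_sum _ _ _) _.
  apply: le_trans (_ : \sum_(0 <= l < L) C <= _).
    by rewrite !big_nat; apply: ler_sum => l /andP [_ hl]; exact: hW.
  by rewrite sumr_const_nat subn0 mulr_natr.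
have hB : forall x, exists w, sigma_sum pair (fun j => pair x (f j) *: b j) w /\
    `|w| <= Cu * Cs * L%:R * `|x|.
  move=> x; pose c j := pair x (f j).
  have hl : forall l, exists w, (l < L)%N ->
      sigma_sum pair (fun j => (eps (nn l j) * c j) *: e (nn l j)) w /\
      `|w| <= Cu * Cs * `|x|.
    move=> l; case: (ltnP l L) => hlL; last by exists 0.
    have [z [hz hzn]] := hu c (fun j => eps (nn l j)) 1 x (fun j => eps_le1 _) (B5 x).
    have [h1 _] := hsp (fun j => eps (nn l j) * c j) (nn l) (nn_incr l hlL).
    have [w [hw hwn]] := h1 z hz.
    exists w => _; split => //.
    rewrite ler_pdivrMl // in hwn; apply: le_trans hwn _.
    rewrite mulr1 in hzn; rewrite [Cu * Cs]mulrC -mulrA.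
    by apply: ler_wpM2l; [exact: ltW|].
  have [W hW] := choice hl.
  exists (\sum_(0 <= l < L) W l); split.
  - have -> : (fun j => c j *: b j) =
        (fun j => \sum_(0 <= l < L) (eps (nn l j) * c j) *: e (nn l j)).
      apply: funext => j; rewrite /b (big_nth 0%N) Bs_size scaler_sumr.
      by apply: eq_bigr => l _; rewrite scalerA mulrC.
    by apply: (@sigma_big _ _ _ pair H) => l; rewrite mem_index_iota => /= hlL; exact: (hW l hlL).1.
  - rewrite [_ * L%:R * _]mulrAC; apply: sum_bound => l hlL; exact: (hW l hlL).2.
have pairR_sum : forall x (s : seq nat) (g : nat -> R) (F : nat -> Y),
    pair x (\sum_(k <- s) g k *: F k) = \sum_(k <- s) g k * pair x (F k).
  move=> x s g F; rewrite (@pair_sum _ _ _ _ H' _ s xpredT _ x) /=.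
  by apply: eq_bigr => k _; rewrite (@pairZ _ _ _ _ H').
have hQ : forall x, exists w, sigma_sum pair (fun j => pair x (d j) *: e j) w /\
    `|w| <= Cu * Cs * L%:R * `|x|.
  move=> x; pose c j := pair x (f j).
  have hl : forall l, exists w, (l < L)%N ->
      sigma_sum pair (fun j => (eps (nn l j) * c (nn l j)) *: e j) w /\
      `|w| <= Cu * Cs * `|x|.
    move=> l; case: (ltnP l L) => hlL; last by exists 0.
    pose gam k := if `[< exists j, nn l j = k >] then eps k else 0.
    have gam1 : forall k, `|gam k| <= 1.
      by move=> k; rewrite /gam; case: asboolP => _; rewrite ?normr0.
    have [z [hz hzn]] := hu c gam 1 x gam1 (B5 x).
    have E : (fun k => (gam k * c k) *: e k) =
      (fun k => if `[< exists j, nn l j = k >] then (eps k * c k) *: e k else 0).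
      by apply: funext => k; rewrite /gam; case: asboolP => _; rewrite ?mul0r ?scale0r.
    rewrite E in hz.
    have hz' := @sigma_subseq _ _ _ pair (fun k => (eps k * c k) *: e k) (nn l) z
      (nn_incr l hlL) hz.
    have [_ h2] := hsp (fun j => eps (nn l j) * c (nn l j)) (nn l) (nn_incr l hlL).
    have [w [hw hwn]] := h2 z hz'.
    exists w => _; split => //.
    apply: le_trans hwn _.
    rewrite mulr1 in hzn; rewrite [Cu * Cs]mulrC -mulrA.
    by apply: ler_wpM2l; [exact: ltW|].
  have [W hW] := choice hl.
  exists (\sum_(0 <= l < L) W l); split.
  - have -> : (fun j => pair x (d j) *: e j) =
        (fun j => \sum_(0 <= l < L) (eps (nn l j) * c (nn l j)) *: e j).
      apply: funext => j; rewrite /d pairR_sum (big_nth 0%N) Bs_size scaler_suml.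
      by [].
    by apply: (@sigma_big _ _ _ pair H) => l; rewrite mem_index_iota => /= hlL; exact: (hW l hlL).1.
  - rewrite [_ * L%:R * _]mulrAC; apply: sum_bound => l hlL; exact: (hW l hlL).2.
have [BB hBB] := choice hB.
have [QQ hQQ] := choice hQ.
exists BB, QQ.
split; first by move=> x; exact: (hBB x).1.
split; first by move=> x; exact: (hQQ x).1.
split.
  move=> a x1 x2; apply: suniq (hBB _).1 _.
  have -> : (fun j => pair (a *: x1 + x2) (f j) *: b j) =
     (fun j => a *: (pair x1 (f j) *: b j) + pair x2 (f j) *: b j).
    by apply: funext => j; rewrite pair_linl scalerDl scalerA.
  by apply: (@sigma_lin _ _ _ pair H); [exact: (hBB x1).1|exact: (hBB x2).1].
split.
  move=> a x1 x2; apply: suniq (hQQ _).1 _.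
  have -> : (fun j => pair (a *: x1 + x2) (d j) *: e j) =
     (fun j => a *: (pair x1 (d j) *: e j) + pair x2 (d j) *: e j).
    by apply: funext => j; rewrite pair_linl scalerDl scalerA.
  by apply: (@sigma_lin _ _ _ pair H); [exact: (hQQ x1).1|exact: (hQQ x2).1].
split; last by split=> x; [exact: (hBB x).2|exact: (hQQ x).2].
have blk_lt : forall i j k k', (i < j)%N -> k \in Bs i -> k' \in Bs j -> (k < k')%N.
  move=> i j k k'; elim: j k' => // j IH k' hij hk hk'.
  move: hij; rewrite ltnS leq_eqVlt => /orP [/eqP Eij|hij].
    by subst i; exact: Bs_incr _ _ _ hk hk'.
  have hs : (0 < size (Bs j))%N.
    by rewrite Bs_size -(Bs_size i); case: (Bs i) hk.
  have hm := mem_nth 0%N hs.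
  exact: (@ltn_trans _ _ _ (IH _ hij hk hm) (Bs_incr _ _ _ hm hk')).
have bij : forall i j, pair (b i) (d j) = if i == j then L%:R else 0.
  move=> i j; rewrite /b (@pair_sum _ _ _ _ H _ (Bs i) xpredT _ (d j)) /=.
  under eq_bigr => k _ do rewrite (@pairZ _ _ _ _ H) /d pairR_sum.
  case: eqP => [<-|/eqP nij].
    rewrite big_seq; under eq_bigr => k hk.
      rewrite (big_rem k hk) /= B4 eqxx mulr1 big_seq big1; last first.
        move=> k' hk'; rewrite B4; case: eqP => [Ek|_]; last by rewrite mulr0.
        by subst k'; move: hk'; rewrite mem_rem_uniqF.
      rewrite addr0.
      have -> : eps k * eps k = 1 by case: (eps_sign k) => ->; rewrite ?mulrNN mulr1.
      over.
    by rewrite -big_seq -(Bs_size i) -sum1_size natr_sum.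
  rewrite big_seq big1 // => k hk; rewrite big_seq big1 ?mulr0 // => k' hk'.
  rewrite B4; case: eqP => [Ek|_]; last by rewrite mulr0.
  subst k'; case: (ltngtP i j) => hij.
  - by have := blk_lt _ _ _ _ hij hk hk'; rewrite ltnn.
  - by have := blk_lt _ _ _ _ hij hk' hk; rewrite ltnn.
  - by rewrite hij eqxx in nij.
have key : forall x j, pair (BB x) (d j) = L%:R * pair x (f j).
  move=> x j; rewrite -(cvg_lim _ ((hBB x).1 (d j))) //.
  apply: cvg_lim => //; apply: cvg_near_cst.
  exists j.+1 => // N /= hN.
  rewrite (@pair_sum _ _ _ _ H) /=.
  under eq_bigr => i _ do rewrite (@pairZ _ _ _ _ H) bij.
  rewrite (bigD1 (Ordinal hN)) //= eqxx big1 ?addr0; first by rewrite mulrC.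
  move=> i /eqP hi; case: eqP => [Eij|_]; last by rewrite mulr0.
  by exfalso; apply: hi; apply: val_inj.
move=> x; apply: suniq ((hQQ (BB x)).1) _.
have -> : (fun j => pair (BB x) (d j) *: e j) =
   (fun j => L%:R *: (pair x (f j) *: e j) + 0).
  by apply: funext => j; rewrite key addr0 scalerA.
rewrite -[L%:R *: x]addr0.
by apply: (@sigma_lin _ _ _ pair H); [exact: B5|exact: sigma0].
Qed.
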